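(* For all level expressions $l_1, l_2$: $l_1 \simeq l_2$ if and only if $[\![ l_1 ]\!]_\sigma = [\![ l_2 ]\!]_\sigma$ for every function $\sigma : \mathcal{I} \to \mathbb{N}$.
   Context: Level expressions are generated by the grammar $l ::= i \mid \mathtt{z} \mid \mathtt{s}\,l \mid l \sqcup l'$, where $i$ ranges over an infinite set $\mathcal{I}$ of level variables. The relation $\simeq$ is the smallest congruence on level expressions (reflexive, symmetric, transitive, closed under the constructors $\mathtt{s}$ and $\sqcup$, and closed under substitution of level expressions for level variables) containing the equations $i_1 \sqcup (i_2 \sqcup i_3) \approx (i_1 \sqcup i_2) \sqcup i_3$, $i_1 \sqcup i_2 \approx i_2 \sqcup i_1$, $\mathtt{s}\,(i_1 \sqcup i_2) \approx \mathtt{s}\,i_1 \sqcup \mathtt{s}\,i_2$, $i \sqcup \mathtt{s}\,i \approx \mathtt{s}\,i$, $i \sqcup \mathtt{z} \approx i$, $i \sqcup i \approx i$ (for level variables $i, i_1, i_2, i_3$). Given $\sigma : \mathcal{I} \to \mathbb{N}$, the interpretation $[\![ l ]\!]_\sigma \in \mathbb{N}$ is defined by $[\![ i ]\!]_\sigma = \sigma(i)$, $[\![ \mathtt{z} ]\!]_\sigma = 0$, $[\![ \mathtt{s}\,l ]\!]_\sigma = [\![ l ]\!]_\sigma + 1$, $[\![ l \sqcup l' ]\!]_\sigma = \max([\![ l ]\!]_\sigma, [\![ l' ]\!]_\sigma)$. *)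

(* Defs.v *)
From Stdlib Require Import Arith.

(* Level variables: the infinite set I is taken to be nat. *)
Definition lvar := nat.

Inductive level : Type :=
| LVar : lvar -> level
| LZ : level
| LS : level -> level
| LMax : level -> level -> level.

Fixpoint subst (s : lvar -> level) (l : level) : level :=
  match l with
  | LVar i => s i
  | LZ => LZ
  | LS l' => LS (subst s l')
  | LMax a b => LMax (subst s a) (subst s b)
  end.

Inductive level_ax : level -> level -> Prop :=
| ax_assoc i1 i2 i3 :
    level_ax (LMax (LVar i1) (LMax (LVar i2) (LVar i3)))
             (LMax (LMax (LVar i1) (LVar i2)) (LVar i3))
| ax_comm i1 i2 : level_ax (LMax (LVar i1) (LVar i2)) (LMax (LVar i2) (LVar i1))
| ax_sdist i1 i2 :
    level_ax (LS (LMax (LVar i1) (LVar i2))) (LMax (LS (LVar i1)) (LS (LVar i2)))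
| ax_sabs i : level_ax (LMax (LVar i) (LS (LVar i))) (LS (LVar i))
| ax_zero i : level_ax (LMax (LVar i) LZ) (LVar i)
| ax_idem i : level_ax (LMax (LVar i) (LVar i)) (LVar i).

Inductive level_eq : level -> level -> Prop :=
| leq_ax l1 l2 : level_ax l1 l2 -> level_eq l1 l2
| leq_refl l : level_eq l l
| leq_sym l1 l2 : level_eq l1 l2 -> level_eq l2 l1
| leq_trans l1 l2 l3 : level_eq l1 l2 -> level_eq l2 l3 -> level_eq l1 l3
| leq_S l1 l2 : level_eq l1 l2 -> level_eq (LS l1) (LS l2)
| leq_max l1 l1' l2 l2' :
    level_eq l1 l1' -> level_eq l2 l2' -> level_eq (LMax l1 l2) (LMax l1' l2')
| leq_subst (s : lvar -> level) l1 l2 :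
    level_eq l1 l2 -> level_eq (subst s l1) (subst s l2).

Fixpoint interp (sigma : lvar -> nat) (l : level) : nat :=
  match l with
  | LVar i => sigma i
  | LZ => 0
  | LS l' => S (interp sigma l')
  | LMax a b => Nat.max (interp sigma a) (interp sigma b)
  end.

(* Main.v *)
Require Import Defs.
From Stdlib Require Import Arith Lia List.
Import ListNotations.

Definition s3 (a b c : level) : lvar -> level :=
  fun i => match i with 0 => a | 1 => b | _ => c end.

Notation E := level_eq.

Lemma E_assoc a b c : E (LMax a (LMax b c)) (LMax (LMax a b) c).
Proof. exact (leq_subst (s3 a b c) _ _ (leq_ax _ _ (ax_assoc 0 1 2))). Qed.
Lemma E_comm a b : E (LMax a b) (LMax b a).
Proof. exact (leq_subst (s3 a b a) _ _ (leq_ax _ _ (ax_comm 0 1))). Qed.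
Lemma E_sdist a b : E (LS (LMax a b)) (LMax (LS a) (LS b)).
Proof. exact (leq_subst (s3 a b a) _ _ (leq_ax _ _ (ax_sdist 0 1))). Qed.
Lemma E_sabs a : E (LMax a (LS a)) (LS a).
Proof. exact (leq_subst (s3 a a a) _ _ (leq_ax _ _ (ax_sabs 0))). Qed.
Lemma E_zero a : E (LMax a LZ) a.
Proof. exact (leq_subst (s3 a a a) _ _ (leq_ax _ _ (ax_zero 0))). Qed.
Lemma E_idem a : E (LMax a a) a.
Proof. exact (leq_subst (s3 a a a) _ _ (leq_ax _ _ (ax_idem 0))). Qed.
Lemma E_zerol a : E (LMax LZ a) a.
Proof. eapply leq_trans; [apply E_comm|apply E_zero]. Qed.

Fixpoint Sn (n : nat) (l : level) : level :=
  match n with 0 => l | S n => LS (Sn n l) end.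

Lemma Sn_cong n a b : E a b -> E (Sn n a) (Sn n b).
Proof. induction n; simpl; intros; auto using leq_S. Qed.

Lemma Sn_dist n a b : E (Sn n (LMax a b)) (LMax (Sn n a) (Sn n b)).
Proof.
  induction n; simpl. apply leq_refl.
  eapply leq_trans. apply leq_S, IHn. apply E_sdist.
Qed.

Lemma Sn_add n m a : Sn (n + m) a = Sn n (Sn m a).
Proof. induction n; simpl; congruence. Qed.

Lemma sabs_n d a : E (LMax a (Sn d a)) (Sn d a).
Proof.
  induction d; simpl. apply E_idem.
  (* a ⊔ S(S^d a) = a ⊔ (S^d a ⊔ S S^d a) = (a ⊔ S^d a) ⊔ S S^d a *)
  eapply leq_trans. apply leq_max. apply leq_refl. apply leq_sym, E_sabs.
  eapply leq_trans. apply E_assoc.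
  eapply leq_trans. apply leq_max. apply IHd. apply leq_refl.
  apply E_sabs.
Qed.

Definition le a b := E (LMax a b) b.

Lemma le_trans a b c : le a b -> le b c -> le a c.
Proof.
  unfold le; intros H1 H2.
  eapply leq_trans. apply leq_max. apply leq_refl. apply leq_sym, H2.
  eapply leq_trans. apply E_assoc.
  eapply leq_trans. apply leq_max. apply H1. apply leq_refl.
  exact H2.
Qed.

Lemma le_antisym a b : le a b -> le b a -> E a b.
Proof.
  unfold le; intros H1 H2.
  eapply leq_trans. apply leq_sym, H2.
  eapply leq_trans. apply E_comm. exact H1.
Qed.

Definition atom (a : option nat * nat) : level :=
  Sn (snd a) (match fst a with Some i => LVar i | None => LZ end).

Fixpoint join (A : list (option nat * nat)) : level :=
  match A with [] => LZ | a :: r => LMax (atom a) (join r) end.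

Definition incr (a : option nat * nat) := (fst a, S (snd a)).

Fixpoint atoms (l : level) : list (option nat * nat) :=
  match l with
  | LVar i => [(Some i, 0)]
  | LZ => [(None, 0)]
  | LS l => map incr (atoms l)
  | LMax a b => atoms a ++ atoms b
  end.

Lemma atoms_ne l : atoms l <> [].
Proof.
  induction l; simpl; try discriminate.
  destruct (atoms l); simpl; congruence.
  destruct (atoms l1); simpl; congruence.
Qed.

Lemma join_app A B : E (join (A ++ B)) (LMax (join A) (join B)).
Proof.
  induction A; simpl. apply leq_sym, E_zerol.
  eapply leq_trans. apply leq_max. apply leq_refl. apply IHA.
  apply E_assoc.
Qed.

Lemma join_S a r : E (LS (join (a :: r))) (join (map incr (a :: r))).
Proof.
  revert a; induction r; intros; simpl.
  - eapply leq_trans. apply leq_S, E_zero. apply leq_sym, E_zero.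
  - eapply leq_trans. apply E_sdist.
    apply leq_max. apply leq_refl. apply IHr.
Qed.

Lemma atoms_E l : E l (join (atoms l)).
Proof.
  induction l; simpl.
  - apply leq_sym, E_zero.
  - apply leq_sym, E_zero.
  - destruct (atoms l) eqn:H. exfalso; apply (atoms_ne l H).
    eapply leq_trans. apply leq_S, IHl. apply join_S.
  - eapply leq_trans. apply leq_max; eassumption. apply leq_sym, join_app.
Qed.

Lemma member_le a A : In a A -> le (atom a) (join A).
Proof.
  induction A; simpl; intros H; [contradiction|]. unfold le in *.
  destruct H as [->|H].
  - eapply leq_trans. apply E_assoc. apply leq_max. apply E_idem. apply leq_refl.
  - specialize (IHA H).
    eapply leq_trans. apply E_assoc.
    eapply leq_trans. apply leq_max. apply E_comm. apply leq_refl.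
    eapply leq_trans. apply leq_sym, E_assoc.
    apply leq_max. apply leq_refl. exact IHA.
Qed.

Lemma join_le A J : (forall a, In a A -> le (atom a) J) -> le (join A) J.
Proof.
  induction A; simpl; intros H; unfold le in *.
  - apply E_zerol.
  - eapply leq_trans. apply leq_sym, E_assoc.
    eapply leq_trans. apply leq_max. apply leq_refl. apply IHA; auto.
    apply H; auto.
Qed.

Definition dom (a b : option nat * nat) :=
  snd a <= snd b /\ (fst a = None \/ fst a = fst b).

Lemma dom_le a b : dom a b -> le (atom a) (atom b).
Proof.
  destruct a as [o k], b as [o' k']; unfold dom, le, atom; simpl.
  intros [Hk Ho].
  replace k' with (k + (k' - k)) by lia. rewrite Sn_add.
  eapply leq_trans. apply leq_sym, Sn_dist. apply Sn_cong.
  destruct Ho as [-> | ->].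
  - apply E_zerol.
  - apply sabs_n.
Qed.

Lemma interp_subst sg s l :
  interp sg (subst s l) = interp (fun i => interp sg (s i)) l.
Proof. induction l; simpl; auto. Qed.

Lemma sound l1 l2 : E l1 l2 -> forall sg, interp sg l1 = interp sg l2.
Proof.
  induction 1; intros sg; simpl.
  - destruct H; simpl; lia.
  - auto.
  - rewrite IHlevel_eq; auto.
  - rewrite IHlevel_eq1, IHlevel_eq2; auto.
  - rewrite IHlevel_eq; auto.
  - rewrite IHlevel_eq1, IHlevel_eq2; auto.
  - rewrite !interp_subst; auto.
Qed.

Definition aval sg (a : option nat * nat) :=
  snd a + match fst a with Some i => sg i | None => 0 end.

Lemma interp_atom sg a : interp sg (atom a) = aval sg a.
Proof.
  destruct a as [o k]; unfold atom, aval; simpl.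
  induction k; simpl; [destruct o; auto|]. rewrite IHk; lia.
Qed.

Lemma join_max sg A : A <> [] -> exists b, In b A /\ interp sg (join A) = aval sg b.
Proof.
  induction A; intros H; [congruence|]. simpl.
  destruct A as [|c A].
  - exists a; split; auto. simpl. rewrite interp_atom; lia.
  - destruct IHA as [b [Hb Hv]]; [discriminate|].
    rewrite interp_atom, Hv.
    destruct (Nat.le_ge_cases (aval sg a) (aval sg b)).
    + exists b; split; [right; auto|lia].
    + exists a; split; [left; auto|lia].
Qed.

Fixpoint bound (A : list (option nat * nat)) :=
  match A with [] => 0 | a :: r => snd a + bound r end.

Lemma bound_in a A : In a A -> snd a <= bound A.
Proof. induction A; simpl; intros H; [contradiction|]. destruct H as [H|H]; [subst; lia|]; specialize (IHA H); lia. Qed.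

Lemma le_sem a b sg : le a b -> interp sg a <= interp sg b.
Proof. unfold le; intros H. pose proof (sound _ _ H sg). simpl in H0. lia. Qed.

Lemma dominated l1 l2 : (forall sg, interp sg l1 = interp sg l2) ->
  forall a, In a (atoms l1) -> exists b, In b (atoms l2) /\ dom a b.
Proof.
  intros Hs a Ha.
  pose proof (member_le _ _ Ha) as Hle.
  assert (Hs' : forall sg, interp sg (join (atoms l1)) = interp sg (join (atoms l2))).
  { intros sg. rewrite <- (sound _ _ (atoms_E l1)), <- (sound _ _ (atoms_E l2)). auto. }
  destruct a as [[i|] k].
  - set (M := S (bound (atoms l2))).
    set (sg := fun j => if Nat.eqb j i then M else 0).
    pose proof (le_sem _ _ sg Hle) as H1. rewrite interp_atom, Hs' in H1.
    destruct (join_max sg _ (atoms_ne l2)) as [[o' k'] [Hb Hv]].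
    pose proof (bound_in _ _ Hb) as Hbd; simpl in Hbd.
    rewrite Hv in H1. unfold aval, sg in H1; simpl in H1.
    rewrite Nat.eqb_refl in H1.
    exists (o', k'); split; auto. unfold dom; simpl.
    destruct o' as [j|].
    + destruct (Nat.eqb_spec j i).
      * subst; split; [lia| right; auto].
      * unfold M in *; lia.
    + unfold M in *; lia.
  - pose proof (le_sem _ _ (fun _ => 0) Hle) as H1. rewrite interp_atom, Hs' in H1.
    destruct (join_max (fun _ => 0) _ (atoms_ne l2)) as [[o' k'] [Hb Hv]].
    rewrite Hv in H1. unfold aval in H1; simpl in H1.
    exists (o', k'); split; auto. unfold dom; simpl. split; [destruct o'; lia| left; auto].
Qed.

Lemma side l1 l2 : (forall sg, interp sg l1 = interp sg l2) ->
  le (join (atoms l1)) (join (atoms l2)).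
Proof.
  intros Hs. apply join_le. intros a Ha.
  destruct (dominated l1 l2 Hs a Ha) as [b [Hb Hd]].
  eapply le_trans. apply dom_le, Hd. apply member_le, Hb.
Qed.

Theorem mainTheorem1 (l1 l2 : level) :
  level_eq l1 l2 <-> (forall sigma : lvar -> nat, interp sigma l1 = interp sigma l2).
Proof.
  split. apply sound.
  intros Hs.
  eapply leq_trans. apply atoms_E.
  eapply leq_trans. 2: apply leq_sym, atoms_E.
  apply le_antisym; apply side; auto.
Qed.
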